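(* Let $\mathcal{H}$ be a complex separable Hilbert space and $\mathcal{E}(\mathcal{H})$ its set of effects. The function $\mathcal{B}_0:\mathcal{E}(\mathcal{H})\to\mathbb{R}$ defined by $$\mathcal{B}_0(A):=\|A\|-\|I-A\|$$ is a bias measure.
   Context: An effect is a selfadjoint bounded operator $A$ on $\mathcal{H}$ with $\mathbb{O}\le A\le I$; $\mathcal{E}(\mathcal{H})$ is the set of effects, $A':=I-A$, norms are operator norms, $\sigma_A$ is the spectrum of $A$. For an effect $A$ put $\mu(\sigma_A):=\tfrac12(\max\sigma_A+\min\sigma_A)=\tfrac12(\|A\|+1-\|A'\|)$; $A$ is called unbiased if $\mu(\sigma_A)=\tfrac12$. A function $\mathcal{B}:\mathcal{E}(\mathcal{H})\to\mathbb{R}$ is a bias measure if: (B1) $-1\le\mathcal{B}(A)\le1$; (B2) $\mathcal{B}(A)=0$ iff $\mu(\sigma_A)=\tfrac12$; (B3) $\mathcal{B}(A)=1$ iff $A=I$, and $\mathcal{B}(A)=-1$ iff $A=\mathbb{O}$; (B4) $\mathcal{B}(A)=-\mathcal{B}(A')$; (B5) $\mathcal{B}(CAC^{-1})=\mathcal{B}(A)$ for every invertible bounded operator $C$ such that $CAC^{-1}$ is an effect; (B6) $A\mapsto\mathcal{B}(A)$ is continuous in operator norm. *)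

(* Defs.v *)
From HB Require Import structures.
From mathcomp Require Import all_boot all_order all_algebra.
From mathcomp Require Import complex.
From mathcomp Require Import boolp classical_sets reals.
Set Implicit Arguments. Unset Strict Implicit. Unset Printing Implicit Defensive.
Import Order.TTheory GRing.Theory Num.Theory.
Local Open Scope ring_scope.
Local Open Scope classical_set_scope.

Record hilbert (R : realType) := Hilbert {
  hcar :> lmodType R[i];
  ip : hcar -> hcar -> R[i];
  ipD : forall x y z, ip (x + y) z = ip x z + ip y z;
  ipZ : forall (a : R[i]) x y, ip (a *: x) y = a * ip x y;
  ip_sym : forall x y, ip y x = conjc (ip x y);
  ip_ge0 : forall x, 0 <= ip x x;
  ip_eq0 : forall x, ip x x = 0 -> x = 0;
  hnorm_of : hcar -> R := fun x => Num.sqrt (complex.Re (ip x x));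
  h_complete : forall u : nat -> hcar,
    (forall e : R, 0 < e -> exists N, forall m n, (N <= m)%N -> (N <= n)%N ->
        hnorm_of (u m - u n) < e) ->
    exists l, forall e : R, 0 < e -> exists N, forall n, (N <= n)%N ->
        hnorm_of (u n - l) < e;
  h_separable : exists d : nat -> hcar,
    forall x (e : R), 0 < e -> exists n, hnorm_of (x - d n) < e;
  h_nontrivial : exists x : hcar, x <> 0
}.

Section Operators.
Variables (R : realType) (H : hilbert R).

Definition hnorm (x : H) : R := Num.sqrt (complex.Re (ip x x)).

Definition bounded_linear (T : H -> H) : Prop :=
  (forall (a : R[i]) x y, T (a *: x + y) = a *: T x + T y) /\
  (exists M : R, forall x, hnorm (T x) <= M * hnorm x).

Definition opnorm (T : H -> H) : R :=
  sup [set hnorm (T x) | x in [set x : H | hnorm x <= 1]].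

Definition selfadjoint (T : H -> H) : Prop :=
  forall x y, ip (T x) y = ip x (T y).

Definition is_effect (A : H -> H) : Prop :=
  [/\ bounded_linear A, selfadjoint A,
      (forall x, 0 <= ip (A x) x) & (forall x, 0 <= ip (x - A x) x)].

Definition compl_eff (A : H -> H) : H -> H := fun x => x - A x.

Definition invertible_op (T : H -> H) : Prop :=
  exists S : H -> H, [/\ bounded_linear S, cancel T S & cancel S T].

Definition spectrum (T : H -> H) : set R[i] :=
  [set z | ~ invertible_op (fun x => T x - z *: x)].

(* real part of the spectrum (the whole spectrum, for selfadjoint T) *)
Definition rspectrum (T : H -> H) : set R := [set r : R | spectrum T (Complex r 0)].

Definition mu_spec (A : H -> H) : R :=
  (sup (rspectrum A) + inf (rspectrum A)) / 2.

Definition is_bias_measure (B : (H -> H) -> R) : Prop :=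
  [/\ (* B1 *) (forall A, is_effect A -> -1 <= B A <= 1) /\
      (* B2 *) (forall A, is_effect A -> (B A = 0 <-> mu_spec A = 1 / 2)),
      (* B3 *) (forall A, is_effect A ->
                  (B A = 1 <-> A = (fun x => x)) /\ (B A = -1 <-> A = (fun _ => 0))),
      (* B4 *) (forall A, is_effect A -> B A = - B (compl_eff A)),
      (* B5 *) (forall A (C Ci : H -> H), is_effect A ->
                  bounded_linear C -> bounded_linear Ci ->
                  cancel C Ci -> cancel Ci C ->
                  is_effect (C \o A \o Ci) -> B (C \o A \o Ci) = B A) &
      (* B6 *) (forall A, is_effect A -> forall e : R, 0 < e ->
                  exists2 d : R, 0 < d & forall A', is_effect A' ->
                    opnorm (fun x => A x - A' x) < d -> `|B A - B A'| < e)].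

Definition B0 (A : H -> H) : R := opnorm A - opnorm (compl_eff A).

End Operators.

(* Main.v *)
Require Import Defs.
From mathcomp Require Import all_boot all_order all_algebra.
From mathcomp Require Import complex.
From mathcomp Require Import boolp classical_sets reals.
From mathcomp Require Import ring lra.
Set Implicit Arguments. Unset Strict Implicit. Unset Printing Implicit Defensive.
Import Order.TTheory GRing.Theory Num.Theory.
Local Open Scope ring_scope.
Local Open Scope classical_set_scope.
Local Open Scope complex_scope.

Section Basic.
Variables (R : realType) (H : hilbert R).
Implicit Types (x y z : H) (a : R[i]) (t : R).

Lemma cjD (u v : R[i]) : conjc (u + v) = conjc u + conjc v.
Proof. case: u; case: v => a b c d /=; congr Complex; ring. Qed.
Lemma cjM (u v : R[i]) : conjc (u * v) = conjc u * conjc v.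
Proof. case: u; case: v => a b c d /=; congr Complex; ring. Qed.
Lemma cjN (u : R[i]) : conjc (- u) = - conjc u.
Proof. by case: u. Qed.

Lemma ipDr x y z : ip x (y + z) = ip x y + ip x z.
Proof. by rewrite (ip_sym (y+z)) ipD cjD -(ip_sym y) -(ip_sym z). Qed.

Lemma ipZr a x y : ip x (a *: y) = conjc a * ip x y.
Proof. by rewrite (ip_sym (a *: y)) ipZ cjM -(ip_sym y). Qed.

Lemma ip0l y : ip (0 : H) y = 0.
Proof. by rewrite -[0 : H](scale0r (0:H)) ipZ mul0r. Qed.

Lemma ipNl x y : ip (- x) y = - ip x y.
Proof. by rewrite -scaleN1r ipZ mulN1r. Qed.

Lemma ipNr x y : ip x (- y) = - ip x y.
Proof. by rewrite (ip_sym (- y)) ipNl cjN -(ip_sym y). Qed.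

Definition rip x y : R := complex.Re (ip x y).

Lemma ReD (u v : R[i]) : complex.Re (u + v) = complex.Re u + complex.Re v.
Proof. by case: u; case: v. Qed.
Lemma ReN (u : R[i]) : complex.Re (- u) = - complex.Re u.
Proof. by case: u. Qed.
Lemma ReMr t (u : R[i]) : complex.Re (t%:C * u) = t * complex.Re u.
Proof. by case: u => a b /=; rewrite mul0r subr0. Qed.
Lemma ReJ (u : R[i]) : complex.Re (conjc u) = complex.Re u.
Proof. by case: u. Qed.

Lemma ripD x y z : rip (x + y) z = rip x z + rip y z.
Proof. by rewrite /rip ipD ReD. Qed.
Lemma ripDr x y z : rip x (y + z) = rip x y + rip x z.
Proof. by rewrite /rip ipDr ReD. Qed.
Lemma ripN x y : rip (- x) y = - rip x y.
Proof. by rewrite /rip ipNl ReN. Qed.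
Lemma ripNr x y : rip x (- y) = - rip x y.
Proof. by rewrite /rip ipNr ReN. Qed.
Lemma ripB x y z : rip (x - y) z = rip x z - rip y z.
Proof. by rewrite ripD ripN. Qed.
Lemma ripBr x y z : rip x (y - z) = rip x y - rip x z.
Proof. by rewrite ripDr ripNr. Qed.
Lemma ripZ t x y : rip (t%:C *: x) y = t * rip x y.
Proof. by rewrite /rip ipZ ReMr. Qed.
Lemma ripZr t x y : rip x (t%:C *: y) = t * rip x y.
Proof. by rewrite /rip ipZr conjc_real ReMr. Qed.
Lemma rip_sym x y : rip x y = rip y x.
Proof. by rewrite /rip (ip_sym x y) ReJ. Qed.
Lemma rip_ge0 x : 0 <= rip x x.
Proof. by have := ip_ge0 x; rewrite lecE /= => /andP[]. Qed.
Lemma rip0 x : rip x x = 0 -> x = 0.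
Proof.
move=> h; apply: ip_eq0; have := ip_ge0 x; rewrite lecE /=.
move: h; rewrite /rip; case: (ip x x) => a b /= -> /andP[/eqP -> _] //.
Qed.

Lemma hnormE x : hnorm x = Num.sqrt (rip x x). Proof. by []. Qed.
Lemma hnorm_ge0 x : 0 <= hnorm x. Proof. exact: sqrtr_ge0. Qed.
Lemma hnorm_sq x : hnorm x ^+ 2 = rip x x.
Proof. by rewrite hnormE sqr_sqrtr // rip_ge0. Qed.
Lemma hnorm0 : hnorm (0 : H) = 0.
Proof. by rewrite hnormE /rip ip0l /= sqrtr0. Qed.
Lemma hnorm_eq0 x : hnorm x = 0 -> x = 0.
Proof. by move=> h; apply: rip0; rewrite -hnorm_sq h expr0n. Qed.
Lemma hnormN x : hnorm (- x) = hnorm x.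
Proof. by rewrite hnormE ripN ripNr opprK. Qed.
Lemma hnormZ t x : hnorm (t%:C *: x) = `|t| * hnorm x.
Proof.
by rewrite hnormE ripZ ripZr mulrA -expr2 sqrtrM ?sqr_ge0 // sqrtr_sqr.
Qed.

End Basic.

Section RealLemmas.
Variable R : realType.

Lemma disc (a b c : R) : (forall t, 0 <= a - 2*t*b + t^+2*c) -> 0 <= a -> 0 <= c ->
  b^+2 <= a * c.
Proof.
move=> h a0 c0; have [cpos|] := ltrP 0 c.
  have := h (b / c); set u := b / c => hu.
  have hb : b = u * c by rewrite /u divfK // gt_eqF.
  rewrite hb in hu *; nra.
move=> cle; have c00 : c = 0 by apply/le_anti/andP.
have [b0|bn0] := eqVneq b 0.
  by rewrite b0 c00 expr0n /= mulr0.
have := h ((a + 1) / (2 * b)); set u := (a + 1) / (2 * b) => hu.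
have hb : 2 * u * b = a + 1 by rewrite /u; field.
exfalso; move: hu; rewrite c00 mulr0 addr0 hb; lra.
Qed.

Lemma le_sq (u v : R) : 0 <= v -> u ^+ 2 <= v ^+ 2 -> u <= v.
Proof. move=> v0 h; nra. Qed.

Lemma le_of_forall_lt (a : R) : (forall e, 0 < e -> a <= e) -> a <= 0.
Proof.
move=> h; case: (lerP a 0) => // ap.
have := h (a / 2) (divr_gt0 ap (ltr0Sn _ 1)); lra.
Qed.

Lemma geom (q : R) n : 0 <= q -> q <= 1 -> q ^+ n * (1 + n%:R * (1 - q)) <= 1.
Proof.
move=> q0 q1; elim: n => [|n IH]; first by rewrite expr0 mul0r addr0 mulr1.
have pn1 : q ^+ n <= 1 by rewrite exprn_ile1.
have pn0 : 0 <= q ^+ n by rewrite exprn_ge0.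
rewrite exprS -natr1.
have h1 : q * (q ^+ n * (1 + n%:R * (1 - q))) <= q by nra.
have h2 : (q * q ^+ n) * (1 - q) <= 1 - q.
  have : q * q ^+ n <= 1 by rewrite mulr_ile1.
  nra.
have -> : q * q ^+ n * (1 + (n%:R + 1) * (1 - q)) =
   q * (q ^+ n * (1 + n%:R * (1 - q))) + (q * q ^+ n) * (1 - q) by ring.
lra.
Qed.

Lemma geom_small (q e : R) : 0 <= q -> q < 1 -> 0 < e -> exists n, q ^+ n < e.
Proof.
move=> q0 q1 e0.
have hp : 0 <= e^-1 / (1 - q) by rewrite divr_ge0 // ?invr_ge0 ?subr_ge0 ltW.
have := archi_boundP hp.
set n := Num.bound _ => hn; exists n.
have g := geom n q0 (ltW q1).
have h1 : e^-1 < n%:R * (1 - q).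
  by move: hn; rewrite ltr_pdivrMr ?subr_gt0.
have h2 : 1 < e * (n%:R * (1 - q)).
  have ee : e * e^-1 = 1 by rewrite mulfV // gt_eqF.
  nra.
have pn0 : 0 <= q ^+ n by rewrite exprn_ge0.
have n0 : 0 <= n%:R * (1 - q) :> R by rewrite mulr_ge0 // subr_ge0 ltW.
rewrite ltNge; apply/negP => pe.
have n1 : 0 <= 1 + n%:R * (1 - q) :> R by lra.
have := ler_wpM2r n1 pe.
nra.
Qed.

End RealLemmas.

Section Hilb.
Variables (R : realType) (H : hilbert R).
Implicit Types (x y z : H) (a : R[i]) (t : R) (T : H -> H).

Lemma rip_exp x y t :
  rip (x - t%:C *: y) (x - t%:C *: y) = rip x x - 2*t*rip x y + t^+2 * rip y y.
Proof. rewrite ripB !ripBr !ripZ !ripZr (rip_sym y x); ring. Qed.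

Lemma CS x y : rip x y <= hnorm x * hnorm y.
Proof.
have d := @disc R (rip x x) (rip x y) (rip y y) (fun t => ltac:(rewrite -rip_exp; exact: rip_ge0)) (rip_ge0 x) (rip_ge0 y).
apply: le_sq; first by rewrite mulr_ge0 ?hnorm_ge0.
by rewrite exprMn !hnorm_sq.
Qed.

Lemma CSN x y : - rip x y <= hnorm x * hnorm y.
Proof. by rewrite -ripN -(hnormN x) CS. Qed.

Lemma hnormD x y : hnorm (x + y) <= hnorm x + hnorm y.
Proof.
apply: le_sq; first by rewrite addr_ge0 ?hnorm_ge0.
rewrite hnorm_sq ripD !ripDr (rip_sym y x) sqrrD !hnorm_sq.
have := CS x y; lra.
Qed.

Lemma hnormB_sym x y : hnorm (x - y) = hnorm (y - x).
Proof. by rewrite -opprB hnormN. Qed.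

Definition linop T := forall a x y, T (a *: x + y) = a *: T x + T y.

Lemma lin0 T : linop T -> T 0 = 0.
Proof.
move=> L; have := L 1 0 0; rewrite !scale1r !addr0 => h.
by have := congr1 (fun v => v - T 0) h; rewrite subrr addrK => <-.
Qed.
Lemma linD T : linop T -> forall x y, T (x + y) = T x + T y.
Proof. by move=> L x y; have := L 1 x y; rewrite !scale1r. Qed.
Lemma linZ T : linop T -> forall a x, T (a *: x) = a *: T x.
Proof. by move=> L a x; have := L a x 0; rewrite !addr0 lin0 // addr0. Qed.
Lemma linN T : linop T -> forall x, T (- x) = - T x.
Proof. by move=> L x; rewrite -scaleN1r linZ // scaleN1r. Qed.
Lemma linB T : linop T -> forall x y, T (x - y) = T x - T y.
Proof. by move=> L x y; rewrite linD // linN. Qed.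

Definition bnd T := exists M : R, forall x, hnorm (T x) <= M * hnorm x.

Lemma bl_split T : bounded_linear T <-> linop T /\ bnd T.
Proof. by []. Qed.

Definition NS T := [set hnorm (T x) | x in [set x : H | hnorm x <= 1]].

Lemma opnormE T : opnorm T = sup (NS T). Proof. by []. Qed.

Lemma NS_ub T : bnd T -> has_ubound (NS T).
Proof.
move=> [M hM]; exists `|M| => _ [x hx <-].
apply: (le_trans (hM x)); apply: (le_trans (ler_norm _)).
rewrite normrM (ger0_norm (hnorm_ge0 x)) -{2}(mulr1 `|M|).
by rewrite ler_wpM2l.
Qed.

Lemma NS_n0 T : NS T !=set0.
Proof. by exists (hnorm (T 0)), 0; rewrite //= hnorm0 ler01. Qed.

Lemma opnorm_le T c : (forall x, hnorm x <= 1 -> hnorm (T x) <= c) -> opnorm T <= c.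
Proof. move=> h; apply: ge_sup; first exact: NS_n0. by move=> _ [x hx <-]; apply: h. Qed.

Lemma opnorm_ge T x : bnd T -> hnorm x <= 1 -> hnorm (T x) <= opnorm T.
Proof. by move=> b hx; apply: (ub_le_sup (NS_ub b)); exists x. Qed.

Lemma opnorm_ge0 T : linop T -> bnd T -> 0 <= opnorm T.
Proof.
move=> L b; have := opnorm_ge b (x := 0); rewrite lin0 // hnorm0; apply.
exact: ler01.
Qed.

Lemma opnorm_bound T : linop T -> bnd T -> forall x, hnorm (T x) <= opnorm T * hnorm x.
Proof.
move=> L b x; have [h0|hpos] := eqVneq (hnorm x) 0.
  by rewrite (hnorm_eq0 h0) lin0 // !hnorm0 mulr0.
have hp : 0 < hnorm x by rewrite lt0r hpos hnorm_ge0.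
set n := hnorm x.
have := opnorm_ge b (x := (n^-1)%:C *: x).
rewrite linZ // !hnormZ ger0_norm ?invr_ge0 ?hnorm_ge0 // mulVf // => /(_ (lexx _)).
by rewrite ler_pdivrMl // mulrC.
Qed.

Lemma opnorm_adh T e : bnd T -> 0 < e ->
  exists x, hnorm x <= 1 /\ opnorm T - e < hnorm (T x).
Proof.
move=> b e0; have [_ [x hx <-] h] := sup_adherent e0 (conj (NS_n0 T) (NS_ub b)).
by exists x.
Qed.

End Hilb.

Lemma gcs_real (R : realType) (a b N : R) :
  (forall t, 0 <= a - 2 * t * b + t ^+ 2 * (N * b)) -> 0 <= a -> 0 <= b -> 0 <= N -> b <= N * a.
Proof.
move=> h a0 b0 N0; have [Np|] := ltrP 0 N.
  have := h N^-1; have e : N^-1 ^+ 2 * (N * b) = N^-1 * b.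
    by rewrite expr2 -mulrA (mulrA _ N) mulVf ?gt_eqF // mul1r.
  rewrite e => h1.
  have : 0 <= N * (a - 2 * N^-1 * b + N^-1 * b) by rewrite mulr_ge0 // ltW.
  have -> : N * (a - 2 * N^-1 * b + N^-1 * b) = N * a - b by field; rewrite gt_eqF.
  lra.
move=> Nle; have N00 : N = 0 by apply/le_anti/andP.
rewrite N00 mul0r; case: (lerP b 0) => // bp.
have := h ((a + 1) / b); rewrite N00 mul0r mulr0 addr0.
have -> : 2 * ((a + 1) / b) * b = 2 * (a + 1) by field; rewrite gt_eqF.
lra.
Qed.

Section Eff.
Variables (R : realType) (H : hilbert R).
Implicit Types (x y z : H) (a : R[i]) (t : R) (T A P : H -> H).

Lemma Re_ge0 (u : R[i]) : 0 <= u -> 0 <= complex.Re u.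
Proof. by rewrite lecE => /andP[]. Qed.

Lemma ripSA P x y : selfadjoint P -> rip (P x) y = rip x (P y).
Proof. by move=> S; rewrite /rip S. Qed.

Lemma GCS P (N : R) : linop P -> selfadjoint P -> 0 <= N ->
  (forall y, 0 <= rip (P y) y) -> (forall y, rip (P y) y <= N * rip y y) ->
  forall x, rip (P x) (P x) <= N * rip (P x) x.
Proof.
move=> L S N0 h0 h1 x; apply: gcs_real => //; last exact: rip_ge0.
move=> t; have := h0 (x - t%:C *: P x).
rewrite linB // linZ // ripB !ripBr !ripZ !ripZr.
rewrite (ripSA _ _ S) [rip (P (P x)) x](ripSA _ _ S).
have := h1 (P x); have t2 : 0 <= t ^+ 2 by rewrite sqr_ge0.
set c := rip (P (P x)) (P x); set b := rip (P x) (P x); set a := rip x (P x).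
move=> hc; have : t ^+ 2 * c <= t ^+ 2 * (N * b) by rewrite ler_wpM2l.
rewrite expr2 => hc2 hh; lra.
Qed.

Section OneEffect.
Variable A : H -> H.
Hypothesis eA : is_effect A.

Lemma eff_lin : linop A. Proof. by case: eA => [[]]. Qed.
Lemma eff_bnd : bnd A. Proof. by case: eA => [[]]. Qed.
Lemma eff_sa : selfadjoint A. Proof. by case: eA. Qed.
Lemma eff_q0 x : 0 <= rip (A x) x. Proof. by case: eA => _ _ h _; apply: Re_ge0. Qed.
Lemma eff_q1 x : rip (A x) x <= rip x x.
Proof.
case: eA => _ _ _ /(_ x) /Re_ge0 h.
have : 0 <= rip (x - A x) x by exact: h.
rewrite ripB; lra.
Qed.

Lemma eff_norm1 x : hnorm (A x) <= hnorm x.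
Proof.
apply: le_sq; first exact: hnorm_ge0.
rewrite !hnorm_sq.
have := GCS eff_lin eff_sa ler01 eff_q0 (fun y => ltac:(rewrite mul1r; exact: eff_q1)) x.
have := eff_q1 x; lra.
Qed.

Lemma opnorm_eff_le1 : opnorm A <= 1.
Proof. apply: opnorm_le => x hx; exact: le_trans (eff_norm1 x) hx. Qed.

Lemma opnorm_eff_ge0 : 0 <= opnorm A.
Proof. exact: opnorm_ge0 eff_lin eff_bnd. Qed.

Lemma eff_qM x : rip (A x) x <= opnorm A * rip x x.
Proof.
apply: (le_trans (CS _ _)); rewrite -hnorm_sq expr2 mulrA.
apply: ler_wpM2r; first exact: hnorm_ge0.
exact: opnorm_bound eff_lin eff_bnd x.
Qed.

Lemma eff_sqM x : rip (A x) (A x) <= opnorm A * rip (A x) x.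
Proof. exact: GCS eff_lin eff_sa opnorm_eff_ge0 eff_q0 eff_qM x. Qed.

Lemma compl_effE x : compl_eff A x = x - A x. Proof. by []. Qed.

Lemma compl_is_effect : is_effect (compl_eff A).
Proof.
have L := eff_lin; have S := eff_sa.
split.
- split.
    by move=> a x y; rewrite /compl_eff L scalerBr opprD addrACA.
  exists 2 => x; rewrite /compl_eff.
  apply: (le_trans (hnormD _ _)); rewrite hnormN.
  have := eff_norm1 x; lra.
- by move=> x y; rewrite /compl_eff ipD ipNl ipDr ipNr S.
- by case: eA.
- move=> x; rewrite /compl_eff.
  have -> : x - (x - A x) = A x by rewrite opprB addrC subrK.
  by case: eA.
Qed.

Lemma compl_complK x : compl_eff (compl_eff A) x = A x.
Proof. by rewrite /compl_eff opprB addrC subrK. Qed.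

End OneEffect.
End Eff.

Lemma zid (V : zmodType) (a b c d : V) : a - b - c = a - (c + d) - (b - d).
Proof.
rewrite opprD opprB -!addrA; congr (_ + _). rewrite addrA [-c - d + _]addrC.
by rewrite -!addrA [d + _]addrC -!addrA addNr addr0.
Qed.

Section Inv.
Variables (R : realType) (H : hilbert R).
Implicit Types (x y z : H) (a : R[i]) (t : R) (T A P : H -> H).

Lemma hnormZp t x : 0 <= t -> hnorm (t%:C *: x) = t * hnorm x.
Proof. by move=> t0; rewrite hnormZ ger0_norm. Qed.

Lemma inv_ext T T' : (forall x, T x = T' x) -> invertible_op T -> invertible_op T'.
Proof.
move=> e [S [b c1 c2]]; exists S; split => //.
- by move=> x; rewrite -e c1.
- by move=> y; rewrite -e c2.
Qed.

Lemma inv_neg T : invertible_op T -> invertible_op (fun x => - T x).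
Proof.
move=> [S [[L [K hK]] c1 c2]]; exists (fun y => S (- y)); split.
- split; first by move=> a x y; rewrite opprD -scalerN L.
  by exists K => y; rewrite -(hnormN y); apply: hK.
- by move=> x /=; rewrite opprK c1.
- by move=> y /=; rewrite c2 opprK.
Qed.

Lemma INV T (c : R) : linop T -> 0 < c -> (forall x, c * hnorm x <= hnorm (T x)) ->
  (forall y, exists x, T x = y) -> invertible_op T.
Proof.
move=> L c0 lb surj.
have inj : forall x1 x2, T x1 = T x2 -> x1 = x2.
  move=> x1 x2 e; apply/eqP; rewrite -subr_eq0; apply/eqP; apply: hnorm_eq0.
  have := lb (x1 - x2); rewrite linB // e subrr hnorm0 => h.
  apply/le_anti; rewrite hnorm_ge0 andbT.
  by move: h; rewrite pmulr_rle0.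
pose S y := proj1_sig (cid (surj y)).
have TS : forall y, T (S y) = y by move=> y; rewrite /S; case: (cid _).
exists S; split.
- split.
    by move=> a x y; apply: inj; rewrite L !TS.
  exists c^-1 => y; have := lb (S y); rewrite TS => h.
  by rewrite -(ler_pM2l c0) mulrA mulfV ?gt_eqF // mul1r.
- by move=> x; apply: inj; rewrite TS.
- exact: TS.
Qed.

Lemma hcomplete (u : nat -> H) :
  (forall e : R, 0 < e -> exists N, forall m n, (N <= m)%N -> (N <= n)%N ->
        hnorm (u m - u n) < e) ->
  exists l, forall e : R, 0 < e -> exists N, forall n, (N <= n)%N -> hnorm (u n - l) < e.
Proof. exact: h_complete. Qed.

Section Surj.
Variables (P : H -> H) (N c : R).
Hypotheses (LP : linop P) (bP : forall x, hnorm (P x) <= N * hnorm x) (N0 : 0 <= N) (Nc : N < c).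

Fixpoint useq (y : H) (n : nat) : H :=
  if n is n'.+1 then (c^-1)%:C *: (y + P (useq y n')) else 0.

Lemma SURJ y : exists x, c%:C *: x - P x = y.
Proof.
have c0 : 0 < c by apply: le_lt_trans Nc.
set q := N / c.
have q0 : 0 <= q by rewrite divr_ge0 // ltW.
have q1 : q < 1 by rewrite ltr_pdivrMr // mul1r.
set u := useq y.
set d := hnorm (u 1%N).
have d0 : 0 <= d by apply: hnorm_ge0.
have step : forall n, hnorm (u n.+2 - u n.+1) <= q * hnorm (u n.+1 - u n).
  move=> n.
  have E : forall k, u k.+1 = (c^-1)%:C *: (y + P (u k)) by [].
  rewrite [u n.+2]E [X in _ - X]E -scalerBr opprD addrACA subrr add0r -linB //.
  rewrite hnormZp; last by rewrite invr_ge0 ltW.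
  have hb := bP (u n.+1 - u n).
  have ci : 0 <= c^-1 by rewrite invr_ge0 ltW.
  rewrite /q; nra.
have geo : forall n, hnorm (u n.+1 - u n) <= q ^+ n * d.
  elim=> [|n IH]; first by rewrite expr0 mul1r /d /u /= subr0.
  apply: (le_trans (step n)); rewrite exprS -mulrA ler_wpM2l //.
set D := d / (1 - q).
have D0 : 0 <= D by rewrite divr_ge0 // subr_ge0 ltW.
have hD : D * (1 - q) = d by rewrite /D divfK // subr_eq0 gt_eqF.
have cau : forall m k, hnorm (u (m + k)%N - u m) <= D * (q ^+ m - q ^+ (m + k)).
  move=> m; elim=> [|k IH]; first by rewrite addn0 subrr hnorm0 subrr mulr0.
  rewrite addnS.
  have -> : u (m + k).+1 - u m = (u (m + k).+1 - u (m + k)%N) + (u (m + k)%N - u m).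
    by rewrite addrA subrK.
  apply: (le_trans (hnormD _ _)).
  have := geo (m + k)%N; rewrite exprS.
  have e : D * (q ^+ m - q * q ^+ (m + k)) = D * (q ^+ m - q ^+ (m + k)) + q ^+ (m + k) * (D * (1 - q)).
    by ring.
  rewrite e hD; lra.
have cau2 : forall m n, (m <= n)%N -> hnorm (u n - u m) <= D * q ^+ m.
  move=> m n mn; rewrite -(subnKC mn); apply: (le_trans (cau m (n - m)%N)).
  rewrite ler_wpM2l //; have : 0 <= q ^+ (m + (n - m)) by rewrite exprn_ge0.
  lra.
have qmon : forall m n, (m <= n)%N -> q ^+ n <= q ^+ m.
  move=> m n mn; rewrite -(subnKC mn) exprD.
  have : q ^+ (n - m) <= 1 by rewrite exprn_ile1 // ltW.
  have : 0 <= q ^+ m by rewrite exprn_ge0.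
  nra.
have [l hl] : exists l, forall e : R, 0 < e -> exists N, forall n, (N <= n)%N -> hnorm (u n - l) < e.
  apply: hcomplete => e e0.
  have D1 : 0 < D + 1 by lra.
  have [n hn] := geom_small q0 q1 (divr_gt0 e0 D1).
  exists n => i j ni nj.
  have hq : q ^+ n * (D + 1) < e by rewrite -ltr_pdivlMr.
  have qn0 : 0 <= q ^+ n by rewrite exprn_ge0.
  have [ij|ji] := leqP i j.
    rewrite hnormB_sym; apply: (le_lt_trans (cau2 _ _ ij)).
    have := qmon _ _ ni; have : 0 <= q ^+ i by rewrite exprn_ge0. nra.
  apply: (le_lt_trans (cau2 _ _ (ltnW ji))).
  have := qmon _ _ nj; have : 0 <= q ^+ j by rewrite exprn_ge0. nra.
exists l.
apply/eqP; rewrite -subr_eq0; apply/eqP; apply: hnorm_eq0.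
apply/le_anti; rewrite hnorm_ge0 andbT; apply: le_of_forall_lt => e e0.
have cN : 0 < c + N by apply: (lt_le_trans c0); rewrite lerDl.
have [n hn] := hl (e / (c + N)) (divr_gt0 e0 cN).
have h1 := hn n (leqnn n); have h2 := hn n.+1 (leqnSn n).
have eu : c%:C *: u n.+1 = y + P (u n).
  rewrite /u /= scalerA.
  have -> : c%:C * c^-1%:C = 1.
    by apply/eqP; rewrite eq_complex /= !mulr0 mul0r (mulfV (negbT (gt_eqF c0))) subr0 addr0 !eqxx.
  by rewrite scale1r.
have -> : c%:C *: l - P l - y = c%:C *: (l - u n.+1) - P (l - u n).
  by rewrite (linB LP) scalerDr scalerN eu (zid _ _ _ (P (u n))).
apply: (le_trans (hnormD _ _)); rewrite hnormN hnormZp; last exact: ltW.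
rewrite hnormB_sym in h1; rewrite hnormB_sym in h2.
have := bP (l - u n); have := hnorm_ge0 (l - u n).
have ee : e / (c + N) * (c + N) = e by rewrite divfK // gt_eqF.
set E := e / (c + N) in h1 h2 ee *.
have k1 : c * hnorm (l - u n.+1) <= c * E := ler_wpM2l (ltW c0) (ltW h2).
have k2 : N * hnorm (l - u n) <= N * E := ler_wpM2l N0 (ltW h1).
move=> _ hb; lra.
Qed.

End Surj.
End Inv.

Lemma zid2 (V : zmodType) (a b c : V) : (a - b) - (a - c) = c - b.
Proof. by rewrite opprB addrC addrA subrK. Qed.

Section Spec.
Variables (R : realType) (H : hilbert R).
Implicit Types (x y z : H) (a : R[i]) (t : R) (T A P : H -> H).

Lemma rcB (u v : R) : (u - v)%:C = u%:C - v%:C :> R[i].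
Proof. by apply/eqP; rewrite eq_complex /= oppr0 addr0 !eqxx. Qed.

Lemma lin_cP P (w : R[i]) : linop P -> linop (fun x => w *: x - P x).
Proof.
move=> L a x y; rewrite L scalerDr scalerA mulrC -scalerA.
by rewrite scalerBr opprD addrACA.
Qed.

Lemma BB P (N c : R) : (forall x, hnorm (P x) <= N * hnorm x) -> 0 <= c ->
  forall x, (c - N) * hnorm x <= hnorm (c%:C *: x - P x).
Proof.
move=> bP c0 x.
have := hnormD (c%:C *: x - P x) (P x); rewrite subrK hnormZp //.
have := bP x; lra.
Qed.

Lemma INVc P (N c : R) : linop P -> (forall x, hnorm (P x) <= N * hnorm x) ->
  0 <= N -> N < c -> invertible_op (fun x => c%:C *: x - P x).
Proof.
move=> L bP N0 Nc.
apply: (@INV _ _ _ (c - N)).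
- exact: lin_cP.
- by rewrite subr_gt0.
- by apply: BB => //; exact: le_trans N0 (ltW Nc).
- by move=> y; exact: (SURJ L bP N0 Nc y).
Qed.

Section OneEff.
Variable A : H -> H.
Hypothesis eA : is_effect A.

Lemma inv_above r : opnorm A < r -> invertible_op (fun x => A x - r%:C *: x).
Proof.
move=> hr.
have := INVc (eff_lin eA) (opnorm_bound (eff_lin eA) (eff_bnd eA)) (opnorm_eff_ge0 eA) hr.
by move/inv_neg; apply: inv_ext => x; rewrite opprB.
Qed.

Lemma inv_below r : r < 1 - opnorm (compl_eff A) -> invertible_op (fun x => A x - r%:C *: x).
Proof.
move=> hr; have eA' := compl_is_effect eA.
have hr' : opnorm (compl_eff A) < 1 - r by lra.
have := INVc (eff_lin eA') (opnorm_bound (eff_lin eA') (eff_bnd eA')) (opnorm_eff_ge0 eA') hr'.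
apply: inv_ext => x; rewrite /compl_eff rcB scalerBl scale1r.
by rewrite zid2.
Qed.

End OneEff.

Lemma NINV P T : is_effect P ->
  (forall x, hnorm (T x) = hnorm ((opnorm P)%:C *: x - P x)) -> ~ invertible_op T.
Proof.
move=> eP hT [S [[LS [K hK]] c1 c2]].
set N := opnorm P.
have N0 : 0 <= N := opnorm_eff_ge0 eP.
have lb : forall x, hnorm x <= K * hnorm (T x).
  by move=> x; have := hK (T x); rewrite c1.
have LP := eff_lin eP; have bP := opnorm_bound LP (eff_bnd eP).
have [Nz|Npos] := eqVneq N 0.
  have [x xn0] := h_nontrivial H.
  apply: xn0; apply: hnorm_eq0; apply/le_anti; rewrite hnorm_ge0 andbT.
  have Px0 : P x = 0.
    apply: hnorm_eq0; apply/le_anti; rewrite hnorm_ge0 andbT.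
    by have := bP x; rewrite -/N Nz mul0r.
  have := lb x; rewrite hT -/N Nz Px0 subr0.
  have -> : (0 : R)%:C = 0 by [].
  by rewrite scale0r hnorm0 mulr0.
have Np : 0 < N by rewrite lt0r Npos N0.
pose Q := fun z => N%:C *: z - P z.
have LQ : linop Q := lin_cP _ LP.
have SQ : selfadjoint Q.
  move=> z y; rewrite /Q ipD ipNl ipZ ipDr ipNr ipZr conjc_real.
  by rewrite (eff_sa eP).
have Qq : forall y, rip (Q y) y = N * rip y y - rip (P y) y.
  by move=> y; rewrite /Q ripB ripZ.
have Q0 : forall y, 0 <= rip (Q y) y.
  by move=> y; rewrite Qq subr_ge0 (eff_qM eP).
have Q1 : forall y, rip (Q y) y <= N * rip y y.
  by move=> y; rewrite Qq; have := eff_q0 eP y; lra.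
have gQ := GCS LQ SQ N0 Q0 Q1.
set K2 := K ^+ 2.
have K20 : 0 <= K2 by rewrite sqr_ge0.
set eps := N / (4 * (1 + K2)).
have eps0 : 0 < eps by rewrite divr_gt0 // mulr_gt0 //; lra.
have epsE : eps * (4 * (1 + K2)) = N by rewrite /eps divfK // gt_eqF //; lra.
have [x [hx1 hx]] := opnorm_adh (eff_bnd eP) eps0.
rewrite -/N in hx.
set t := hnorm (P x) in hx.
have t1 : t <= hnorm x := eff_norm1 eP x.
have x0 : 0 <= hnorm x := hnorm_ge0 x.
have hTx : hnorm (T x) ^+ 2 <= N ^+ 2 - t ^+ 2.
  rewrite hT hnorm_sq; apply: (le_trans (gQ x)).
  rewrite Qq.
  have hs := eff_sqM eP x; rewrite -/N -hnorm_sq -/t in hs.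
  have rx : rip x x <= 1.
    rewrite -hnorm_sq; have : hnorm x <= 1 := hx1. nra.
  have := eff_q0 eP x. nra.
have hxK : hnorm x ^+ 2 <= K2 * hnorm (T x) ^+ 2.
  have := lb x; have := hnorm_ge0 (T x); rewrite /K2. nra.
have tpos : N - eps < t := hx.
have : t ^+ 2 <= K2 * (N ^+ 2 - t ^+ 2).
  have : t ^+ 2 <= hnorm x ^+ 2 by have := hnorm_ge0 (P x); rewrite -/t; nra.
  have : K2 * hnorm (T x) ^+ 2 <= K2 * (N ^+ 2 - t ^+ 2) by apply: ler_wpM2l.
  lra.
have eN : 4 * eps <= N.
  rewrite -epsE; have : 0 <= eps * (4 * K2) by apply: mulr_ge0; [exact: ltW | apply: mulr_ge0].
  lra.
have t0 : 0 <= N - eps by lra.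
have tt : (N - eps) ^+ 2 < t ^+ 2.
  rewrite ltr_pXn2r // ?nnegrE //; lra.
move=> h.
have : (N - eps) ^+ 2 * (1 + K2) < N ^+ 2 * K2.
  have k1 : 0 < 1 + K2 by lra.
  have hh : (N - eps) ^+ 2 * (1 + K2) < t ^+ 2 * (1 + K2) by rewrite ltr_pM2r.
  lra.
have : N ^+ 2 * (1 + K2) - 2 * N * eps * (1 + K2) <= (N - eps) ^+ 2 * (1 + K2).
  have : 0 <= eps ^+ 2 * (1 + K2) by rewrite mulr_ge0 // ?sqr_ge0 //; lra.
  have -> : (N - eps) ^+ 2 * (1 + K2) = N ^+ 2 * (1 + K2) - 2 * N * eps * (1 + K2) + eps ^+ 2 * (1 + K2) by ring.
  lra.
have : 2 * N * eps * (1 + K2) = N ^+ 2 / 2.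
  have -> : 2 * N * eps * (1 + K2) = N * (eps * (4 * (1 + K2))) / 2 by field.
  by rewrite epsE expr2.
move=> e1 e2 e3. 
have : N ^+ 2 * (1 + K2) = N ^+ 2 * K2 + N ^+ 2 / 2 + N ^+ 2 / 2 by field.
have : 0 < N ^+ 2 by rewrite exprn_gt0.
lra.
Qed.

End Spec.

Lemma zid3 (V : zmodType) (a b c : V) : a - (b - c) = c - (b - a).
Proof. by rewrite !opprB addrCA addrA [c + a]addrC. Qed.

Lemma zid4 (V : zmodType) (a b c : V) : (a - c) - (b - c) = a - b.
Proof. by rewrite opprB addrA subrK. Qed.

Section Final.
Variables (R : realType) (H : hilbert R).
Implicit Types (x y z : H) (a : R[i]) (t : R) (T A P C : H -> H).

Lemma spec_le A r : is_effect A -> rspectrum A r -> r <= opnorm A.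
Proof.
move=> eA hr; rewrite leNgt; apply/negP => lt; apply: hr; exact (inv_above eA lt).
Qed.

Lemma spec_ge A r : is_effect A -> rspectrum A r -> 1 - opnorm (compl_eff A) <= r.
Proof.
move=> eA hr; rewrite leNgt; apply/negP => lt; apply: hr; exact (inv_below eA lt).
Qed.

Lemma spec_M A : is_effect A -> rspectrum A (opnorm A).
Proof.
move=> eA; apply: (NINV eA) => x /=.
by rewrite hnormB_sym.
Qed.

Lemma spec_m A : is_effect A -> rspectrum A (1 - opnorm (compl_eff A)).
Proof.
move=> eA; apply: (NINV (compl_is_effect eA)) => x /=.
change (Complex (1 - opnorm (compl_eff A)) 0) with ((1 - opnorm (compl_eff A))%:C).
by rewrite rcB scalerBl scale1r /compl_eff zid3.
Qed.

Lemma sup_spec A : is_effect A -> sup (rspectrum A) = opnorm A.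
Proof.
move=> eA; apply/le_anti/andP; split.
  apply: ge_sup; first by exists (opnorm A); exact: spec_M.
  by move=> r; apply: spec_le.
apply: (ub_le_sup _ (spec_M eA)).
by exists (opnorm A) => r; apply: spec_le.
Qed.

Lemma inf_spec A : is_effect A -> inf (rspectrum A) = 1 - opnorm (compl_eff A).
Proof.
move=> eA; apply/le_anti/andP; split.
  apply: (ge_inf _ (spec_m eA)).
  by exists (1 - opnorm (compl_eff A)) => r; apply: spec_ge.
apply: lb_le_inf; first by exists (1 - opnorm (compl_eff A)); exact: spec_m.
by move=> r; apply: spec_ge.
Qed.

Lemma B0_spec A : is_effect A -> B0 A = sup (rspectrum A) + inf (rspectrum A) - 1.
Proof. by move=> eA; rewrite /B0 sup_spec // inf_spec //; ring. Qed.

Lemma inv_conj C Ci U : bounded_linear C -> bounded_linear Ci -> cancel C Ci -> cancel Ci C ->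
  invertible_op U -> invertible_op (fun x => C (U (Ci x))).
Proof.
move=> [LC bC] [LCi bCi] k1 k2 [S [[LS bS] s1 s2]].
exists (fun y => C (S (Ci y))); split.
- split.
    by move=> a x y; rewrite LCi LS LC.
  exists (opnorm C * opnorm S * opnorm Ci) => y.
  apply: (le_trans (opnorm_bound LC bC _)).
  rewrite -!mulrA ler_wpM2l ?(opnorm_ge0 LC bC) //.
  apply: (le_trans (opnorm_bound LS bS _)).
  by rewrite ler_wpM2l ?(opnorm_ge0 LS bS) // opnorm_bound.
- by move=> x /=; rewrite k1 s1 k2.
- by move=> y /=; rewrite k1 s2 k2.
Qed.

Lemma rspectrum_sim A C Ci : bounded_linear C -> bounded_linear Ci -> cancel C Ci -> cancel Ci C ->
  rspectrum (C \o A \o Ci) = rspectrum A.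
Proof.
move=> bC bCi k1 k2; have LC := bC.1; have LCi := bCi.1.
rewrite /rspectrum /spectrum; apply/funext => r /=; apply/propext; split => hn hi; apply: hn.
- have := inv_conj bC bCi k1 k2 hi; apply: inv_ext => x /=.
  by rewrite (linB LC) (linZ LC) k2.
- have := inv_conj bCi bC k2 k1 hi; apply: inv_ext => x /=.
  by rewrite (linB LCi) (linZ LCi) !k1.
Qed.

Lemma opnorm_one T : is_effect T -> (forall x, T x = x) -> opnorm T = 1.
Proof.
move=> eT hT; apply/le_anti/andP; split; first exact: opnorm_eff_le1.
have [x xn0] := h_nontrivial H.
have := opnorm_bound (eff_lin eT) (eff_bnd eT) x; rewrite hT.
have hp : 0 < hnorm x.
  rewrite lt0r hnorm_ge0 andbT; apply/eqP => h; apply: xn0; exact: hnorm_eq0.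
rewrite -{1}(mul1r (hnorm x)) ler_pM2r //.
Qed.

Lemma opnorm_zero T : is_effect T -> (forall x, T x = 0) -> opnorm T = 0.
Proof.
move=> eT hT; apply/le_anti/andP; split; last exact: opnorm_eff_ge0.
by apply: opnorm_le => x _; rewrite hT hnorm0.
Qed.

Lemma opnorm_tri T T' D : linop T' -> bnd T' -> linop D -> bnd D ->
  (forall x, hnorm (T x) <= hnorm (T' x) + hnorm (D x)) -> opnorm T <= opnorm T' + opnorm D.
Proof.
move=> L1 b1 L2 b2 h; apply: opnorm_le => x hx.
apply: (le_trans (h x)); apply: lerD; exact: opnorm_ge.
Qed.

Lemma hnormBle x y : hnorm (x - y) <= hnorm x + hnorm y.
Proof. by rewrite -(hnormN y) hnormD. Qed.

End Final.

Theorem mainTheorem3 (R : realType) (H : hilbert R) : is_bias_measure (@B0 R H).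
Proof.
split.
- split.
    move=> A eA; have := opnorm_eff_le1 eA; have := opnorm_eff_ge0 eA.
    have eA' := compl_is_effect eA.
    have := opnorm_eff_le1 eA'; have := opnorm_eff_ge0 eA'.
    rewrite /B0 => *; apply/andP; split; lra.
  move=> A eA; rewrite B0_spec // /mu_spec; split => h; lra.
- move=> A eA.
  have eA' := compl_is_effect eA.
  have := opnorm_eff_le1 eA; have := opnorm_eff_ge0 eA.
  have := opnorm_eff_le1 eA'; have := opnorm_eff_ge0 eA'.
  move=> a1 a2 a3 a4.
  split; split.
  + rewrite /B0 => h.
    have M'0 : opnorm (compl_eff A) = 0 by lra.
    apply/funext => x; apply/eqP; rewrite eq_sym -subr_eq0; apply/eqP.
    apply: hnorm_eq0; apply/le_anti; rewrite hnorm_ge0 andbT.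
    have := opnorm_bound (eff_lin eA') (eff_bnd eA') x.
    by rewrite M'0 mul0r.
  + move=> hA; rewrite /B0 (opnorm_one eA); last by rewrite hA.
    rewrite (opnorm_zero eA'); last by move=> x; rewrite /compl_eff hA subrr.
    by rewrite subr0.
  + rewrite /B0 => h.
    have M0 : opnorm A = 0 by lra.
    apply/funext => x; apply: hnorm_eq0; apply/le_anti; rewrite hnorm_ge0 andbT.
    have := opnorm_bound (eff_lin eA) (eff_bnd eA) x.
    by rewrite M0 mul0r.
  + move=> hA; rewrite /B0 (opnorm_zero eA); last by rewrite hA.
    rewrite (opnorm_one eA'); last by move=> x; rewrite /compl_eff hA subr0.
    by rewrite sub0r.
- move=> A eA; rewrite /B0.
  have -> : compl_eff (compl_eff A) = A by apply/funext => x; exact: compl_complK.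
  by rewrite opprB.
- move=> A C Ci eA bC bCi k1 k2 eCA.
  by rewrite !B0_spec // rspectrum_sim.
- move=> A eA e e0; exists (e / 2); first by rewrite divr_gt0.
  move=> A' eA' hd.
  set D := fun x => A x - A' x.
  have LA := eff_lin eA; have LA' := eff_lin eA'.
  have LD : linop D.
    by move=> a x y; rewrite /D LA LA' scalerBr opprD addrACA.
  have bD : bnd D.
    exists (opnorm A + opnorm A') => x; rewrite /D mulrDl.
    apply: (le_trans (hnormBle _ _)); apply: lerD; exact: opnorm_bound (eff_lin _) (eff_bnd _) x.
  have eC := compl_is_effect eA; have eC' := compl_is_effect eA'.
  have t1 : opnorm A <= opnorm A' + opnorm D.
    apply: opnorm_tri (eff_lin eA') (eff_bnd eA') LD bD _ => x.
    by rewrite -{1}(subrK (A' x) (A x)) addrC hnormD.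
  have t2 : opnorm A' <= opnorm A + opnorm D.
    apply: opnorm_tri (eff_lin eA) (eff_bnd eA) LD bD _ => x.
    have -> : A' x = A x - D x by rewrite /D opprB addrC subrK.
    exact: hnormBle.
  have t3 : opnorm (compl_eff A) <= opnorm (compl_eff A') + opnorm D.
    apply: opnorm_tri (eff_lin eC') (eff_bnd eC') LD bD _ => x.
    have -> : compl_eff A x = compl_eff A' x - D x by rewrite /compl_eff /D zid4.
    exact: hnormBle.
  have t4 : opnorm (compl_eff A') <= opnorm (compl_eff A) + opnorm D.
    apply: opnorm_tri (eff_lin eC) (eff_bnd eC) LD bD _ => x.
    have -> : compl_eff A' x = compl_eff A x + D x.
      by rewrite /compl_eff /D addrA subrK.
    exact: hnormD.
  have hd' : opnorm D < e / 2 := hd.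
  rewrite /B0 ltr_norml; apply/andP; split; lra.
Qed.
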